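(* Let $0<q<1$ and let $r,f,g,v,w,u,x$ be complex parameters with $\max\{|xs|,|xu|\}<1$. Then, with the operators acting on the variable $s$, $$\mathbb{T}(r,f,g,v,w,uD_s)\left\{\frac{1}{(xs;q)_\infty}\right\}=\frac{1}{(xs;q)_\infty}\;{}_3\Phi_2\left[\begin{matrix}r,f,g;\\ v,w;\end{matrix}\;q;\,xu\right]$$ and $$\mathbb{E}(r,f,g,v,w,-u\theta_s)\left\{(xs;q)_\infty\right\}=(xs;q)_\infty\;{}_3\Phi_3\left[\begin{matrix}r,f,g;\\ v,w,0;\end{matrix}\;q;\,xu\right].$$
   Context: Throughout $0<q<1$. For complex $\alpha$: $(\alpha;q)_0=1$, $(\alpha;q)_n=\prod_{k=0}^{n-1}(1-\alpha q^k)$, $(\alpha;q)_\infty=\prod_{k=0}^\infty(1-\alpha q^k)$, and $(\alpha_1,\dots,\alpha_m;q)_n=(\alpha_1;q)_n\cdots(\alpha_m;q)_n$. The basic hypergeometric series is ${}_{\mathfrak r}\Phi_{\mathfrak s}\left[\begin{matrix}a_1,\dots,a_{\mathfrak r};\\ b_1,\dots,b_{\mathfrak s};\end{matrix}\,q;z\right]=\sum_{n=0}^\infty\big[(-1)^nq^{\binom n2}\big]^{1+\mathfrak s-\mathfrak r}\frac{(a_1,\dots,a_{\mathfrak r};q)_n}{(b_1,\dots,b_{\mathfrak s};q)_n}\frac{z^n}{(q;q)_n}$. The $q$-difference operators acting on functions of $s$ are $D_s\{F(s)\}=\frac{F(s)-F(qs)}{s}$ and $\theta_s\{F(s)\}=\frac{F(q^{-1}s)-F(s)}{q^{-1}s}$,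 with $D_s^0,\theta_s^0$ the identity. For a parameter $y$, $\mathbb{T}(r,f,g,v,w,yD_s)=\sum_{n=0}^\infty\frac{(r,f,g;q)_n}{(q,v,w;q)_n}(yD_s)^n$ and $\mathbb{E}(r,f,g,v,w,y\theta_s)=\sum_{n=0}^\infty\frac{(-1)^nq^{\binom n2}(r,f,g;q)_n}{(q,v,w;q)_n}(y\theta_s)^n$ (here $y=u$ resp. $y=-u$), applied termwise. *)

(* Defs.v *)
From Stdlib Require Import Reals List.
From Coquelicot Require Import Coquelicot.
Open Scope C_scope.

Fixpoint qpoch (a : C) (q : R) (n : nat) : C :=
  match n with
  | O => 1
  | S m => qpoch a q m * (1 - a * RtoC (q ^ m))
  end.

Definition qpochs (l : list C) (q : R) (n : nat) : C :=
  fold_right (fun a acc => qpoch a q n * acc) 1 l.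

Definition CLim (u : nat -> C) : C :=
  (real (Lim_seq (fun n => Re (u n))), real (Lim_seq (fun n => Im (u n)))).

Definition qpinf (a : C) (q : R) : C := CLim (qpoch a q).

Definition binom2 (n : nat) : nat := (n * (n - 1) / 2)%nat.

Definition bhs_term (a b : list C) (q : R) (z : C) (n : nat) : C :=
  ((- 1) ^ n * RtoC (q ^ binom2 n)) ^ (1 + length b - length a)
  * qpochs a q n / qpochs b q n * z ^ n / qpoch (RtoC q) q n.

Definition bhs (a b : list C) (q : R) (z : C) : C :=
  CLim (sum_n (bhs_term a b q z)).

Definition Dq (q : R) (F : C -> C) : C -> C :=
  fun s => (F s - F (RtoC q * s)) / s.
Definition thetaq (q : R) (F : C -> C) : C -> C :=
  fun s => (F (/ RtoC q * s) - F s) / (/ RtoC q * s).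

Definition T_term (q : R) (r f g v w y : C) (F : C -> C) (s : C) (n : nat) : C :=
  qpochs (r :: f :: g :: nil) q n / qpochs (RtoC q :: v :: w :: nil) q n
  * Nat.iter n (fun G => fun t => y * Dq q G t) F s.

Definition E_term (q : R) (r f g v w y : C) (F : C -> C) (s : C) (n : nat) : C :=
  (- 1) ^ n * RtoC (q ^ binom2 n)
  * qpochs (r :: f :: g :: nil) q n / qpochs (RtoC q :: v :: w :: nil) q n
  * Nat.iter n (fun G => fun t => y * thetaq q G t) F s.

(* Main.v *)
Require Import Defs.
From Stdlib Require Import Reals List Lia Lra Classical.
From Coquelicot Require Import Coquelicot.
Open Scope C_scope.

Lemma CLim_correct (u : nat -> C) l :
  filterlim u eventually (locally l) -> CLim u = l.
Proof.
  intros H. unfold CLim.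
  assert (HR : is_lim_seq (fun n => Re (u n)) (Re l)).
  { apply (proj2 (filterlim_locally (F:=eventually) (fun n => Re (u n)) (Re l))).
    intros eps. destruct (proj1 (filterlim_locally u l) H eps) as [N HN].
    exists N; intros n Hn. destruct (HN n Hn) as [H1 H2]. exact H1. }
  assert (HI : is_lim_seq (fun n => Im (u n)) (Im l)).
  { apply (proj2 (filterlim_locally (F:=eventually) (fun n => Im (u n)) (Im l))).
    intros eps. destruct (proj1 (filterlim_locally u l) H eps) as [N HN].
    exists N; intros n Hn. destruct (HN n Hn) as [H1 H2]. exact H2. }
  rewrite (is_lim_seq_unique _ _ HR), (is_lim_seq_unique _ _ HI).
  destruct l; reflexivity.
Qed.

Lemma Cmod_1_minus (a : C) (t : R) : (0 <= t)%R ->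
  (Cmod (1 - a * RtoC t) <= 1 + Cmod a * t)%R.
Proof.
  intros Ht. unfold Cminus. eapply Rle_trans. apply Cmod_triangle.
  rewrite Cmod_1, Cmod_opp, Cmod_mult, Cmod_R, Rabs_pos_eq; lra.
Qed.

Lemma Cmod_1_minus_ge (a : C) (t : R) : (0 <= t)%R ->
  (1 - Cmod a * t <= Cmod (1 - a * RtoC t))%R.
Proof.
  intros Ht.
  assert (E : (1:C) = (1 - a * RtoC t) + a * RtoC t) by ring.
  assert (H := Cmod_triangle (1 - a * RtoC t) (a * RtoC t)).
  rewrite <- E, Cmod_1, Cmod_mult, Cmod_R, Rabs_pos_eq in H; lra.
Qed.

Lemma qpoch_bound (q : R) (a : C) n : (0 < q < 1)%R ->
  (Cmod (qpoch a q n) <= exp (Cmod a * (1 - q ^ n) / (1 - q)))%R.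
Proof.
  intros Hq. induction n as [|n IH].
  - simpl. rewrite Cmod_1. replace (Cmod a * (1 - 1) / (1 - q))%R with 0%R by (field; lra).
    rewrite exp_0; lra.
  - simpl qpoch. rewrite Cmod_mult.
    assert (Hqn : (0 <= q ^ n)%R) by (apply pow_le; lra).
    assert (H1 := Cmod_1_minus a (q ^ n) Hqn).
    assert (H2 := exp_ineq1_le (Cmod a * q ^ n)).
    assert (H3 := Cmod_ge_0 (qpoch a q n)).
    assert (H4 := Cmod_ge_0 a).
    replace (Cmod a * (1 - q ^ S n) / (1 - q))%R with
      (Cmod a * (1 - q ^ n) / (1 - q) + Cmod a * q ^ n)%R by (simpl; field; lra).
    rewrite exp_plus.
    apply Rle_trans with (exp (Cmod a * (1 - q ^ n) / (1 - q)) * (1 + Cmod a * q ^ n))%R.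
    + apply Rmult_le_compat; try lra. apply Cmod_ge_0.
    + apply Rmult_le_compat_l. left; apply exp_pos. lra.
Qed.

Lemma exp_le' (x y : R) : (x <= y)%R -> (exp x <= exp y)%R.
Proof. intros [H|H]. left; apply exp_increasing; auto. subst; lra. Qed.

Lemma qpoch_bound2 (q : R) (a : C) n : (0 < q < 1)%R ->
  (Cmod (qpoch a q n) <= exp (Cmod a / (1 - q)))%R.
Proof.
  intros Hq. eapply Rle_trans. apply qpoch_bound; auto.
  apply exp_le'.
  assert (0 <= q ^ n)%R by (apply pow_le; lra).
  assert (H4 := Cmod_ge_0 a).
  unfold Rdiv. apply Rmult_le_compat_r. left; apply Rinv_0_lt_compat; lra. nra.
Qed.

Lemma qpinf_lim (q : R) (a : C) : (0 < q < 1)%R ->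
  filterlim (qpoch a q) eventually (locally (qpinf a q)).
Proof.
  intros Hq.
  set (e := fun k => match k with O => (1:C) | S k => (qpoch a q (S k) - qpoch a q k)%C end).
  assert (Hs : forall n, sum_n e n = qpoch a q n).
  { induction n as [|n IHn]. rewrite sum_O; reflexivity.
    rewrite sum_Sn, IHn. change (qpoch a q n + (qpoch a q (S n) - qpoch a q n) = qpoch a q (S n)). ring. }
  assert (Hex : ex_series e).
  { apply ex_series_incr_1.
    apply (ex_series_le (K:=C_AbsRing) (V:=C_CompleteNormedModule)) with (b := fun k => (exp (Cmod a / (1 - q)) * Cmod a * q ^ k)%R).
    - intros k. change (Cmod (e (S k)) <= exp (Cmod a / (1 - q)) * Cmod a * q ^ k)%R. unfold e.
      replace (qpoch a q (S k) - qpoch a q k) with (- (qpoch a q k * (a * RtoC (q ^ k))))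
        by (simpl qpoch; ring).
      rewrite Cmod_opp, !Cmod_mult, Cmod_R, Rabs_pos_eq by (apply pow_le; lra).
      rewrite <- Rmult_assoc. apply Rmult_le_compat_r. apply pow_le; lra.
      apply Rmult_le_compat_r. apply Cmod_ge_0. apply qpoch_bound2; auto.
    - exists (exp (Cmod a / (1 - q)) * Cmod a * / (1 - q))%R.
      apply is_series_ext with (fun n => scal (exp (Cmod a / (1 - q)) * Cmod a)%R (q ^ n)%R).
      intros n; reflexivity.
      assert (Hq' : (Rabs q < 1)%R) by (rewrite Rabs_pos_eq; lra).
      exact (is_series_scal (K:=R_AbsRing) (V:=R_NormedModule) _ _ _ (is_series_geom q Hq')). }
  destruct Hex as [l Hl]. unfold is_series in Hl.
  assert (H : filterlim (qpoch a q) eventually (locally l)).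
  { apply filterlim_ext with (sum_n e); auto. }
  unfold qpinf. rewrite (CLim_correct _ _ H). exact H.
Qed.

Lemma filterlim_shift (u : nat -> C) l :
  filterlim (fun n => u (S n)) eventually (locally l) ->
  filterlim u eventually (locally l).
Proof.
  intros H P HP. destruct (H P HP) as [N HN]. exists (S N).
  intros n Hn. destruct n as [|n]. lia. apply HN. lia.
Qed.

Lemma qpoch_shift (q : R) (a : C) n :
  qpoch a q (S n) = (1 - a) * qpoch (a * RtoC q) q n.
Proof.
  induction n as [|n IH].
  - simpl. change (RtoC 1) with (1 : C). ring.
  - change (qpoch a q (S (S n))) with (qpoch a q (S n) * (1 - a * RtoC (q ^ (S n)))).
    rewrite IH. simpl qpoch. simpl pow. rewrite RtoC_mult. ring.
Qed.

Lemma qpinf_FE (q : R) (a : C) : (0 < q < 1)%R ->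
  qpinf a q = (1 - a) * qpinf (a * RtoC q) q.
Proof.
  intros Hq. unfold qpinf at 1. apply CLim_correct.
  apply filterlim_shift.
  apply filterlim_ext with (fun n => (1 - a) * qpoch (a * RtoC q) q n).
  intros n; rewrite qpoch_shift; reflexivity.
  eapply filterlim_comp. apply qpinf_lim; auto.
  exact (filterlim_scal_r (K:=C_AbsRing) (V:=C_NormedModule) (1 - a) _).
Qed.

Lemma pow_le1 (q : R) m : (0 <= q <= 1)%R -> (0 <= q ^ m <= 1)%R.
Proof.
  intros Hq. induction m; simpl. lra. nra.
Qed.

Lemma qpoch_lower_aux (q : R) (a : C) K m : (0 < q < 1)%R ->
  (Cmod a * q ^ K <= (1 - q) / 2)%R ->
  (Cmod (qpoch a q K) * (1 - Cmod a * q ^ K * (1 - q ^ m) / (1 - q))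
     <= Cmod (qpoch a q (K + m)))%R.
Proof.
  intros Hq HK. induction m as [|m IH].
  - rewrite Nat.add_0_r. simpl. replace (1 - Cmod a * q ^ K * (1 - 1) / (1 - q))%R with 1%R
      by (field; lra). lra.
  - rewrite Nat.add_succ_r. simpl qpoch. rewrite Cmod_mult.
    assert (HqK : (0 <= q ^ K)%R) by (apply pow_le; lra).
    assert (Hqm := pow_le1 q m ltac:(lra)).
    assert (H1 := Cmod_1_minus_ge a (q ^ (K + m)) ltac:(apply pow_le; lra)).
    rewrite pow_add in H1. rewrite (pow_add q K m).
    assert (Ha := Cmod_ge_0 a).
    assert (HP := Cmod_ge_0 (qpoch a q K)).
    assert (HPm := Cmod_ge_0 (qpoch a q (K + m))).
    set (P := Cmod (qpoch a q K)) in *.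
    set (Pm := Cmod (qpoch a q (K + m))) in *.
    set (b := (Cmod a * q ^ K)%R) in *.
    replace (1 - b * (1 - q ^ S m) / (1 - q))%R with
      ((1 - b * (1 - q ^ m) / (1 - q)) - b * q ^ m)%R by (simpl; field; lra).
    assert (Hbb : (0 <= b)%R) by (unfold b; nra).
    set (Sm := (b * (1 - q ^ m) / (1 - q))%R) in *.
    assert (HS : (0 <= Sm)%R).
    { unfold Sm. unfold Rdiv. apply Rmult_le_pos. apply Rmult_le_pos. lra. lra.
      left; apply Rinv_0_lt_compat; lra. }
    assert (Hb1 : (b * q ^ m <= 1)%R) by nra.
    assert (Hb0 : (0 <= b * q ^ m)%R) by nra.
    replace (Cmod a * (q ^ K * q ^ m))%R with (b * q ^ m)%R in H1 by (unfold b; ring).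
    set (t := (b * q ^ m)%R) in *.
    apply Rle_trans with (Pm * (1 - t))%R.
    + apply Rle_trans with (P * (1 - Sm) * (1 - t))%R.
      assert (0 <= P * (Sm * t))%R by (apply Rmult_le_pos; [lra| apply Rmult_le_pos; lra]).
      replace (P * (1 - Sm) * (1 - t))%R with (P * (1 - Sm - t) + P * (Sm * t))%R by ring. lra.
      apply Rmult_le_compat_r; lra.
    + apply Rmult_le_compat_l; lra.
Qed.

Lemma qpoch_lower (q : R) (a : C) K n : (0 < q < 1)%R ->
  (Cmod a * q ^ K <= (1 - q) / 2)%R -> (K <= n)%nat ->
  (Cmod (qpoch a q K) / 2 <= Cmod (qpoch a q n))%R.
Proof.
  intros Hq HK Hn. replace n with (K + (n - K))%nat by lia.
  eapply Rle_trans; [|apply qpoch_lower_aux; auto].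
  assert (Hqm := pow_le1 q (n - K) ltac:(lra)).
  assert (HP := Cmod_ge_0 (qpoch a q K)).
  assert (HqK : (0 <= q ^ K)%R) by (apply pow_le; lra).
  assert (Ha := Cmod_ge_0 a).
  apply Rmult_le_compat_l. lra.
  assert (Cmod a * q ^ K * (1 - q ^ (n - K)) / (1 - q) <= 1/2)%R.
  { apply Rle_trans with (Cmod a * q ^ K / (1 - q))%R.
    unfold Rdiv. apply Rmult_le_compat_r. left; apply Rinv_0_lt_compat; lra.
    assert (0 <= Cmod a * q ^ K)%R by nra.
    assert (0 <= Cmod a * q ^ K * q ^ (n - K))%R by nra. nra.
    apply Rmult_le_reg_r with (1 - q)%R. lra. field_simplify; lra. }
  lra.
Qed.

Lemma exists_K (q A : R) : (0 < q < 1)%R -> (0 <= A)%R ->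
  exists K, (A * q ^ K <= (1 - q) / 2)%R.
Proof.
  intros Hq HA.
  assert (Hq' : (Rabs q < 1)%R) by (rewrite Rabs_pos_eq; lra).
  assert (Hy : (0 < (1 - q) / (2 * (A + 1)))%R).
  { apply Rdiv_lt_0_compat; lra. }
  destruct (pow_lt_1_zero q Hq' _ Hy) as [N HN].
  exists N. specialize (HN N (le_n N)).
  rewrite Rabs_pos_eq in HN by (apply pow_le; lra).
  apply Rle_trans with (A * ((1 - q) / (2 * (A + 1))))%R.
  apply Rmult_le_compat_l; lra.
  apply Rmult_le_reg_r with (2 * (A + 1))%R. lra.
  field_simplify; try lra.
Qed.

Lemma qpoch_pos (q : R) (a : C) n : (0 < q < 1)%R -> (Cmod a < 1)%R ->
  (0 < Cmod (qpoch a q n))%R.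
Proof.
  intros Hq Ha. induction n as [|n IH].
  - simpl. rewrite Cmod_1; lra.
  - simpl qpoch. rewrite Cmod_mult. apply Rmult_lt_0_compat; auto.
    assert (Hqn := pow_le1 q n ltac:(lra)).
    assert (H1 := Cmod_1_minus_ge a (q ^ n) ltac:(lra)).
    assert (H0 := Cmod_ge_0 a).
    nra.
Qed.

Lemma sqrt2_le2 : (sqrt 2 <= 2)%R.
Proof.
  assert (H := sqrt_sqrt 2 ltac:(lra)). assert (H0 := sqrt_pos 2). nra.
Qed.

Lemma qpinf_nz (q : R) (a : C) : (0 < q < 1)%R -> (Cmod a < 1)%R -> qpinf a q <> 0.
Proof.
  intros Hq Ha E.
  destruct (exists_K q (Cmod a) Hq (Cmod_ge_0 a)) as [K HK].
  assert (HP := qpoch_pos q a K Hq Ha).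
  set (c := (Cmod (qpoch a q K) / 2)%R) in *.
  assert (Hc : (0 < c / 2)%R) by (unfold c; lra).
  assert (H := qpinf_lim q a Hq). rewrite E in H.
  destruct (proj1 (filterlim_locally _ _) H (mkposreal _ Hc)) as [N HN].
  specialize (HN (max N K) (Nat.le_max_l _ _)).
  apply C_NormedModule_mixin_compat2 in HN. simpl in HN.
  assert (H2 := qpoch_lower q a K (max N K) Hq HK (Nat.le_max_r _ _)).
  fold c in H2.
  change (Cmod (qpoch a q (max N K) - 0) < sqrt 2 * (c / 2))%R in HN.
  replace (qpoch a q (max N K) - 0) with (qpoch a q (max N K)) in HN by ring.
  assert (H3 := sqrt2_le2). assert (0 <= sqrt 2)%R by apply sqrt_pos.
  assert (sqrt 2 * (c / 2) <= c)%R by nra.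
  lra.
Qed.

Lemma RtoC_q_nz (q : R) : (0 < q)%R -> RtoC q <> 0.
Proof. intros Hq E. apply RtoC_inj in E. lra. Qed.

Lemma Cmod_xqt (q : R) (x t : C) : (0 < q < 1)%R ->
  (Cmod (x * t) < 1)%R -> (Cmod (x * (RtoC q * t)) < 1)%R.
Proof.
  intros Hq H. replace (x * (RtoC q * t)) with (RtoC q * (x * t)) by ring.
  rewrite Cmod_mult, Cmod_R, Rabs_pos_eq by lra.
  assert (H0 := Cmod_ge_0 (x * t)). nra.
Qed.

Lemma one_minus_nz (z : C) : (Cmod z < 1)%R -> 1 - z <> 0.
Proof.
  intros H E. assert (z = 1) by (rewrite <- (Cplus_0_l z), <- E; ring).
  subst. rewrite Cmod_1 in H. lra.
Qed.

Lemma Dq_eq (q : R) G t : Dq q G t = (G t - G (RtoC q * t)) / t.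
Proof. reflexivity. Qed.
Lemma thetaq_eq (q : R) G t : thetaq q G t = (G (/ RtoC q * t) - G t) / (/ RtoC q * t).
Proof. reflexivity. Qed.


Lemma iter_S {A : Type} n (f : A -> A) (x : A) : Nat.iter (S n) f x = f (Nat.iter n f x).
Proof. reflexivity. Qed.

Lemma iterD (q : R) (x u : C) n : (0 < q < 1)%R -> forall t : C, t <> 0 ->
  (Cmod (x * t) < 1)%R ->
  Nat.iter n (fun G => fun t => u * Dq q G t) (fun t => / qpinf (x * t) q) t
  = (u * x) ^ n / qpinf (x * t) q.
Proof.
  intros Hq. induction n as [|n IH]; intros t Ht Hxt.
  - simpl. unfold Cdiv. ring.
  - rewrite iter_S. rewrite Dq_eq. rewrite (IH t Ht Hxt).
    assert (Hqt : RtoC q * t <> 0).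
    { apply Cmult_neq_0. apply RtoC_q_nz; lra. exact Ht. }
    rewrite IH by (auto; apply Cmod_xqt; auto).
    assert (HP1 := qpinf_nz q (x * (RtoC q * t)) Hq (Cmod_xqt q x t Hq Hxt)).
    rewrite (qpinf_FE q (x * t)) by auto.
    replace (x * t * RtoC q) with (x * (RtoC q * t)) by ring.
    assert (H1 := one_minus_nz _ Hxt).
    set (P1 := qpinf (x * (RtoC q * t)) q) in *.
    simpl Cpow. field. repeat split; auto.
Qed.

Lemma iterT (q : R) (x u : C) n : (0 < q < 1)%R -> forall t : C, t <> 0 ->
  Nat.iter n (fun G => fun t => (- u) * thetaq q G t) (fun t => qpinf (x * t) q) t
  = (u * x) ^ n * qpinf (x * t) q.
Proof.
  intros Hq. assert (Hq0 := RtoC_q_nz q ltac:(lra)).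
  induction n as [|n IH]; intros t Ht.
  - simpl. ring.
  - rewrite iter_S. rewrite thetaq_eq.
    assert (Hqt : / RtoC q * t <> 0).
    { apply Cmult_neq_0; auto. intros E. apply Hq0.
      rewrite <- (Cmult_1_l (RtoC q)), <- (Cinv_l (RtoC q)) by auto. rewrite E. ring. }
    rewrite (IH t Ht), (IH _ Hqt).
    rewrite (qpinf_FE q (x * (/ RtoC q * t))) by auto.
    replace (x * (/ RtoC q * t) * RtoC q) with (x * t) by (field; auto).
    simpl Cpow. field. auto.
Qed.

Lemma Cinv0 : / (0 : C) = 0.
Proof. unfold Cinv. apply injective_projections; simpl; unfold Rdiv; ring. Qed.

Lemma Cinv_mult_gen (a b : C) : / (a * b) = / a * / b.
Proof.
  destruct (classic (a = 0)) as [Ha|Ha].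
  { subst. rewrite Cmult_0_l, Cinv0. ring. }
  destruct (classic (b = 0)) as [Hb|Hb].
  { subst. rewrite Cmult_0_r, Cinv0. ring. }
  field. split; auto.
Qed.

Lemma qpoch_zero_prop (q : R) (a : C) K n : qpoch a q K = 0 -> (K <= n)%nat -> qpoch a q n = 0.
Proof.
  intros H0 Hn. induction Hn as [|m Hm IH]. auto.
  simpl. rewrite IH. ring.
Qed.

Lemma Cmod_inv_bound (q : R) (a : C) K n : (0 < q < 1)%R ->
  (Cmod a * q ^ K <= (1 - q) / 2)%R -> (K <= n)%nat ->
  (Cmod (/ qpoch a q n) <= 2 * / Cmod (qpoch a q K))%R.
Proof.
  intros Hq HK Hn.
  destruct (classic (qpoch a q K = 0)) as [E|E].
  - rewrite (qpoch_zero_prop q a K n E Hn), E, Cinv0, Cmod_0, Rinv_0. lra.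
  - assert (H1 := proj1 (Cmod_gt_0 _) E).
    assert (H2 := qpoch_lower q a K n Hq HK Hn).
    assert (H3 : qpoch a q n <> 0).
    { apply Cmod_gt_0. lra. }
    rewrite Cmod_inv by auto.
    apply Rle_trans with (/ (Cmod (qpoch a q K) / 2))%R.
    apply Rinv_le_contravar; lra.
    right. field. lra.
Qed.

Lemma qpochs_cons (q : R) c b n : qpochs (c :: b) q n = qpoch c q n * qpochs b q n.
Proof. reflexivity. Qed.

Lemma inv_qpochs_bound (q : R) (b : list C) K : (0 < q < 1)%R ->
  (forall c, In c b -> (Cmod c * q ^ K <= (1 - q) / 2)%R) ->
  exists B, forall n, (K <= n)%nat -> (Cmod (/ qpochs b q n) <= B)%R.
Proof.
  intros Hq. induction b as [|c b IH]; intros Hb.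
  - exists (Cmod (/ qpochs nil q 0)). intros n _. apply Rle_refl.
  - destruct IH as [B HB]. intros c' Hc'. apply Hb. right; auto.
    exists (2 * / Cmod (qpoch c q K) * B)%R. intros n Hn.
    rewrite qpochs_cons, Cinv_mult_gen, Cmod_mult.
    apply Rmult_le_compat; try apply Cmod_ge_0.
    apply Cmod_inv_bound; auto. apply Hb; left; auto. auto.
Qed.

Lemma qpochs_bound (q : R) (a : list C) : (0 < q < 1)%R ->
  exists M, forall n, (Cmod (qpochs a q n) <= M)%R.
Proof.
  intros Hq. induction a as [|c a IH].
  - exists 1%R. intros n. simpl. rewrite Cmod_1. lra.
  - destruct IH as [M HM]. exists (exp (Cmod c / (1 - q)) * M)%R. intros n.
    rewrite qpochs_cons, Cmod_mult.
    apply Rmult_le_compat; try apply Cmod_ge_0. apply qpoch_bound2; auto. auto.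
Qed.

Fixpoint sumC (l : list C) : R :=
  match l with nil => 0%R | c :: l => (Cmod c + sumC l)%R end.

Lemma sumC_ge (l : list C) c : In c l -> (Cmod c <= sumC l)%R.
Proof.
  induction l as [|d l IH]; simpl. tauto.
  assert (Hp : forall l, (0 <= sumC l)%R).
  { induction l0; simpl. lra. assert (H := Cmod_ge_0 a). lra. }
  intros [E|H]. subst. specialize (Hp l). lra.
  specialize (IH H). assert (H' := Cmod_ge_0 d). lra.
Qed.

Lemma sumC_pos (l : list C) : (0 <= sumC l)%R.
Proof. induction l; simpl. lra. assert (H := Cmod_ge_0 a). lra. Qed.


Lemma sign_bound (q : R) n m e : (0 < q < 1)%R ->
  (Cmod (((- 1) ^ n * RtoC (q ^ m)) ^ e) <= 1)%R.
Proof.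
  intros Hq. rewrite Cmod_pow, Cmod_mult, Cmod_pow, !Cmod_R.
  replace (Rabs (-1)) with 1%R by (rewrite Rabs_left; lra). rewrite pow1.
  rewrite Rabs_pos_eq by (apply pow_le; lra). rewrite Rmult_1_l.
  assert (H := pow_le1 q m ltac:(lra)).
  apply (pow_le1 (q ^ m) e). lra.
Qed.

Lemma bhs_ex (q : R) (a b : list C) (z : C) : (0 < q < 1)%R -> (Cmod z < 1)%R ->
  ex_series (bhs_term a b q z).
Proof.
  intros Hq Hz.
  destruct (exists_K q (sumC (RtoC q :: b)) Hq (sumC_pos _)) as [K HK].
  assert (Hc : forall c, In c (RtoC q :: b) -> (Cmod c * q ^ K <= (1 - q) / 2)%R).
  { intros c Hc. apply Rle_trans with (2 := HK). apply Rmult_le_compat_r.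
    apply pow_le; lra. apply sumC_ge; auto. }
  destruct (inv_qpochs_bound q b K Hq (fun c H => Hc c (or_intror H))) as [B HB].
  destruct (qpochs_bound q a Hq) as [M HM].
  set (BQ := (2 * / Cmod (qpoch (RtoC q) q K))%R).
  assert (HQ : forall n, (K <= n)%nat -> (Cmod (/ qpoch (RtoC q) q n) <= BQ)%R).
  { intros n Hn. apply Cmod_inv_bound; auto. apply Hc; left; auto. }
  apply (proj2 (ex_series_incr_n _ K)).
  apply (ex_series_le (K:=C_AbsRing) (V:=C_CompleteNormedModule)) with
    (b := fun k => (M * B * BQ * Cmod z ^ K * Cmod z ^ k)%R).
  - intros k. change (Cmod (bhs_term a b q z (K + k)) <= M * B * BQ * Cmod z ^ K * Cmod z ^ k)%R.
    unfold bhs_term, Cdiv. rewrite !Cmod_mult, (Cmod_pow z), pow_add.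
    replace (M * B * BQ * Cmod z ^ K * Cmod z ^ k)%R with
      (1 * M * B * (Cmod z ^ K * Cmod z ^ k) * BQ)%R by ring.
    assert (Hz0 := Cmod_ge_0 z).
    apply Rmult_le_compat; try apply Cmod_ge_0.
    repeat apply Rmult_le_pos; try apply Cmod_ge_0; apply pow_le; auto.
    apply Rmult_le_compat; try apply Cmod_ge_0.
    repeat apply Rmult_le_pos; try apply Cmod_ge_0.
    apply Rmult_le_pos; apply pow_le; auto.
    apply Rmult_le_compat; try apply Cmod_ge_0.
    apply Rmult_le_pos; apply Cmod_ge_0.
    apply Rmult_le_compat; try apply Cmod_ge_0.
    apply sign_bound; auto. apply HM. apply HB; lia. apply Rle_refl. apply HQ; lia.
  - assert (Hz' : (Rabs (Cmod z) < 1)%R) by (rewrite Rabs_pos_eq; auto; apply Cmod_ge_0).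
    eexists. exact (is_series_scal (K:=R_AbsRing) (V:=R_NormedModule) _ _ _ (is_series_geom _ Hz')).
Qed.

Lemma bhs_is (q : R) (a b : list C) (z : C) : (0 < q < 1)%R -> (Cmod z < 1)%R ->
  is_series (bhs_term a b q z) (bhs a b q z).
Proof.
  intros Hq Hz. destruct (bhs_ex q a b z Hq Hz) as [l Hl].
  assert (E : bhs a b q z = l) by (apply CLim_correct; exact Hl). rewrite E; exact Hl.
Qed.
Lemma qpoch_0 (q : R) n : qpoch 0 q n = 1.
Proof. induction n; simpl. reflexivity. rewrite IHn. ring. Qed.

Theorem corollary1 (q : R) (r f g v w u x s : C) :
  (0 < q < 1)%R ->
  s <> 0 ->
  (Cmod (x * s) < 1)%R -> (Cmod (x * u) < 1)%R ->
  (* the infinite product (xs;q)_oo converges *)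
  filterlim (qpoch (x * s) q) eventually (locally (qpinf (x * s) q)) /\
  (* the 3Phi2 and 3Phi3 series converge *)
  is_series (bhs_term (r :: f :: g :: nil) (v :: w :: nil) q (x * u))
    (bhs (r :: f :: g :: nil) (v :: w :: nil) q (x * u)) /\
  is_series (bhs_term (r :: f :: g :: nil) (v :: w :: RtoC 0 :: nil) q (x * u))
    (bhs (r :: f :: g :: nil) (v :: w :: RtoC 0 :: nil) q (x * u)) /\
  (* first identity *)
  is_series (T_term q r f g v w u (fun t => / qpinf (x * t) q) s)
    (/ qpinf (x * s) q * bhs (r :: f :: g :: nil) (v :: w :: nil) q (x * u)) /\
  (* second identity *)
  is_series (E_term q r f g v w (- u) (fun t => qpinf (x * t) q) s)
    (qpinf (x * s) q * bhs (r :: f :: g :: nil) (v :: w :: RtoC 0 :: nil) q (x * u)).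
Proof.
  intros Hq Hs Hxs Hxu.
  split; [apply qpinf_lim; auto|].
  split; [apply bhs_is; auto|].
  split; [apply bhs_is; auto|].
  split.
  - apply is_series_ext with
      (fun n => scal (/ qpinf (x * s) q) (bhs_term (r :: f :: g :: nil) (v :: w :: nil) q (x * u) n)).
    + intros n. change (scal ?a ?b) with (a * b). match goal with |- ?a = ?b => change (@eq C a b) end.
      unfold T_term. rewrite iterD by auto.
      unfold bhs_term.
      replace (1 + length (v :: w :: nil) - length (r :: f :: g :: nil))%nat with 0%nat by reflexivity.
      rewrite (qpochs_cons q (RtoC q)). unfold Cdiv. rewrite Cinv_mult_gen.
      rewrite (Cmult_comm u x). unfold Cdiv. simpl Cpow. ring.
    + exact (is_series_scal (K:=C_AbsRing) (V:=C_NormedModule) _ _ _ (bhs_is _ _ _ _ Hq Hxu)).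
  - apply is_series_ext with
      (fun n => scal (qpinf (x * s) q) (bhs_term (r :: f :: g :: nil) (v :: w :: RtoC 0 :: nil) q (x * u) n)).
    + intros n. change (scal ?a ?b) with (a * b). match goal with |- ?a = ?b => change (@eq C a b) end.
      unfold E_term. rewrite iterT by auto.
      unfold bhs_term.
      replace (1 + length (v :: w :: RtoC 0 :: nil) - length (r :: f :: g :: nil))%nat with 1%nat by reflexivity.
      rewrite (qpochs_cons q (RtoC q)). unfold Cdiv. rewrite Cinv_mult_gen.
      unfold qpochs. simpl fold_right. rewrite qpoch_0.
      rewrite (Cmult_comm u x). unfold Cdiv. simpl Cpow. replace (1 * 1 : C) with (1 : C) by ring. ring.
    + exact (is_series_scal (K:=C_AbsRing) (V:=C_NormedModule) _ _ _ (bhs_is _ _ _ _ Hq Hxu)).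
Qed.
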